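(* There is no orientation of the $4$-cube in which exactly $7$ vertices have in-degree $0$, exactly $2$ vertices have in-degree $2$, and exactly $7$ vertices have in-degree $4$ (even though $7+2+7=2^4$ and $0\cdot 7+2\cdot 2+4\cdot 7=4\cdot 2^{3}$).
   Context: The $4$-cube is the graph on binary $4$-tuples with edges between tuples differing in exactly one coordinate. An orientation assigns a direction to each edge; the in-degree of a vertex is the number of edges directed into it. *)

(* Defs.v *)
From mathcomp Require Import all_boot.
Set Implicit Arguments. Unset Strict Implicit. Unset Printing Implicit Defensive.

Definition cube_vertex (n : nat) := {ffun 'I_n -> bool}.

Definition cube_adj (n : nat) (u v : cube_vertex n) : bool :=
  #|[set i : 'I_n | u i != v i]| == 1.

(* An orientation of the n-cube, given as the relation "u -> v" (edge directed
   from u to v): only edges are directed, and each edge receives exactly one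
   direction. *)
Definition is_orientation (n : nat) (o : rel (cube_vertex n)) : Prop :=
  forall u v : cube_vertex n,
    (o u v -> cube_adj u v) /\ (cube_adj u v -> (o u v (+) o v u)).

Definition indeg (n : nat) (o : rel (cube_vertex n)) (v : cube_vertex n) : nat :=
  #|[set u : cube_vertex n | o u v]|.

(* Main.v *)
Require Import Defs.
From mathcomp Require Import all_boot.
Set Implicit Arguments. Unset Strict Implicit. Unset Printing Implicit Defensive.

Definition flip (v : cube_vertex 4) (j : 'I_4) : cube_vertex 4 :=
  [ffun i => if i == j then ~~ v i else v i].

Lemma flipE v j x : flip v j x = (if x == j then ~~ v x else v x).
Proof. by rewrite ffunE. Qed.

Lemma adjP (u v : cube_vertex 4) : reflect (exists j, u = flip v j) (cube_adj u v).
Proof.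
apply: (iffP idP).
  move/cards1P=> [j Hj]; exists j; apply/ffunP => x; rewrite flipE.
  case: (x =P j) => [->|ne].
    have : j \in [set i : 'I_4 | u i != v i] by rewrite Hj set11.
    by rewrite inE; case: (u j); case: (v j).
  have : x \notin [set i : 'I_4 | u i != v i] by rewrite Hj inE; apply/eqP.
  by rewrite inE negbK => /eqP.
move=> [j ->]; apply/cards1P; exists j; apply/setP => x.
by rewrite !inE flipE; case: (x == j); case: (v x).
Qed.

Lemma flipK v j : flip (flip v j) j = v.
Proof. by apply/ffunP => x; rewrite !flipE; case: (x == j); rewrite ?negbK. Qed.

Lemma flipC v i j : flip (flip v i) j = flip (flip v j) i.
Proof. by apply/ffunP => x; rewrite !flipE; case: (x == j); case: (x == i). Qed.

Lemma flip_neq v j : flip v j != v.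
Proof. apply/eqP => /(congr1 (fun f : cube_vertex 4 => f j)); rewrite flipE eqxx; by case: (v j). Qed.

Lemma flip_inj v : injective (flip v).
Proof.
move=> i j /(congr1 (fun f : cube_vertex 4 => f i)); rewrite !flipE eqxx.
by case: (i =P j) => // _; case: (v i).
Qed.

Lemma adj_sym (u v : cube_vertex 4) : cube_adj u v -> cube_adj v u.
Proof. by move/adjP=> [j ->]; apply/adjP; exists j; rewrite flipK. Qed.

Lemma adj_irr (v : cube_vertex 4) : ~~ cube_adj v v.
Proof. by apply/negP => /adjP [j /eqP]; rewrite eq_sym (negbTE (flip_neq _ _)). Qed.

Lemma nbrs v : [set u : cube_vertex 4 | cube_adj u v] = [set flip v j | j : 'I_4].
Proof.
apply/setP => u; rewrite inE; apply/adjP/imsetP => [[j ->]|[j _ ->]]; by exists j.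
Qed.

Lemma card_nbrs v : #|[set u : cube_vertex 4 | cube_adj u v]| = 4.
Proof. by rewrite nbrs card_imset ?cardsT ?card_ord //; apply: flip_inj. Qed.

Lemma card_V : #|[set: cube_vertex 4]| = 16.
Proof. by rewrite cardsT card_ffun card_bool card_ord. Qed.

Lemma third (i j : 'I_4) : exists m : 'I_4, (m != i) && (m != j).
Proof.
case: i j => [[|[|[|[|?]]]] Hi] [[|[|[|[|?]]]] Hj] //;
  first [ by exists (@Ordinal 4 0 isT) | by exists (@Ordinal 4 1 isT) | by exists (@Ordinal 4 2 isT) ].
Qed.

Lemma flip2_other (v : cube_vertex 4) i j m : m != i -> m != j -> flip (flip v i) j m = v m.
Proof. by move=> /negbTE Hi /negbTE Hj; rewrite !flipE Hi Hj. Qed.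

Lemma flip2_l (v : cube_vertex 4) j m : m != j -> flip (flip v m) j m = ~~ v m.
Proof. by move=> /negbTE Hj; rewrite !flipE Hj eqxx. Qed.

Lemma flip2_r (v : cube_vertex 4) i m : m != i -> flip (flip v i) m m = ~~ v m.
Proof. by move=> /negbTE Hi; rewrite !flipE Hi eqxx. Qed.

Lemma nb_neq (b : bool) : b = ~~ b -> False.
Proof. by case: b. Qed.

Theorem mainTheorem6 :
  ~ exists o : rel (cube_vertex 4),
      [/\ is_orientation o,
          #|[set v : cube_vertex 4 | indeg o v == 0]| = 7,
          #|[set v : cube_vertex 4 | indeg o v == 2]| = 2 &
          #|[set v : cube_vertex 4 | indeg o v == 4]| = 7].
Proof.
move=> [o [Ho H0 H2 H4]].
have Xor : forall u v, cube_adj u v -> o u v -> o v u -> False.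
  by move=> u v /(Ho u v).2; case: (o u v); case: (o v u).
have P1 : forall s v, indeg o s = 0 -> cube_adj s v -> o s v.
  move=> s v Hs Hadj; have := (Ho s v).2 Hadj; case Hsv: (o s v) => //= Hvs.
  have : v \in [set u | o u s] by rewrite inE.
  by rewrite /indeg in Hs; rewrite (cards0_eq Hs) inE.
have P2 : forall t u, indeg o t = 4 -> cube_adj u t -> o u t.
  move=> t u Ht Hadj.
  have /eqP E : [set u | o u t] == [set u : cube_vertex 4 | cube_adj u t].
    rewrite eqEcard card_nbrs -[#|_|]/(indeg o t) Ht leqnn andbT.
    by apply/subsetP => w; rewrite !inE => /(Ho w t).1.
  have : u \in [set u : cube_vertex 4 | cube_adj u t] by rewrite inE.
  by rewrite -E inE.
have cls : forall v, [\/ indeg o v = 0, indeg o v = 2 | indeg o v = 4].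
  set A0 := [set v : cube_vertex 4 | indeg o v == 0].
  set A2 := [set v : cube_vertex 4 | indeg o v == 2].
  set A4 := [set v : cube_vertex 4 | indeg o v == 4].
  have D1 : A0 :&: A2 = set0.
    by apply/setP => v; rewrite !inE; case: (indeg o v) => [|[|[|[|?]]]].
  have D2 : (A0 :|: A2) :&: A4 = set0.
    by apply/setP => v; rewrite !inE; case: (indeg o v) => [|[|[|[|[|?]]]]].
  have C : #|(A0 :|: A2) :|: A4| = 16 by rewrite cardsU D2 cards0 cardsU D1 cards0 H0 H2 H4.
  have /eqP E : (A0 :|: A2) :|: A4 == setT by rewrite eqEcard subsetT card_V C.
  move=> v; have : v \in (A0 :|: A2) :|: A4 by rewrite E inE.
  by rewrite !inE => /orP [/orP [] /eqP ->|/eqP ->]; [apply: Or31|apply: Or32|apply: Or33].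
have indep : forall x y, cube_adj x y -> indeg o x = indeg o y -> indeg o x <> 2 -> False.
  move=> x y Hxy Exy N2; have Hyx := adj_sym Hxy.
  case: (cls x) => Hx //.
    by apply: (Xor x y Hxy); [apply: P1 | apply: P1; rewrite -?Exy].
  by apply: (Xor x y Hxy); apply: P2; rewrite -?Exy.
have /cards2P [a [b [Hab EA2]]] := introT eqP H2.
have memA2 : forall v, indeg o v = 2 -> v = a \/ v = b.
  move=> v Hv; have : v \in [set v : cube_vertex 4 | indeg o v == 2] by rewrite inE Hv.
  by rewrite EA2 !inE => /orP [] /eqP; [left|right].
have Ha : indeg o a = 2.
  by have : a \in [set v : cube_vertex 4 | indeg o v == 2]; [rewrite EA2 !inE eqxx | rewrite inE => /eqP].
have G : forall i j, i != j -> indeg o (flip a i) = 0 -> indeg o (flip a j) = 4 ->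
    flip (flip a i) j = b.
  move=> i j Hij Hx Hy.
  have Hcx : cube_adj (flip (flip a i) j) (flip a i) by apply/adjP; exists j.
  have Hcy : cube_adj (flip (flip a i) j) (flip a j) by apply/adjP; exists i; rewrite flipC.
  case: (cls (flip (flip a i) j)) => Hc.
  - by case: (indep _ _ Hcx); rewrite ?Hc ?Hx.
  - case: (memA2 _ Hc) => // E.
    have := congr1 (fun f : cube_vertex 4 => f i) E => /=.
    by rewrite !flipE (negbTE Hij) eqxx => /esym /nb_neq.
  - by case: (indep _ _ Hcy); rewrite ?Hc ?Hy.
have [s /andP [Hsa Hsb]] : exists s, o s a && (s != b).
  case: (boolP [exists s, o s a && (s != b)]) => [/existsP //|/existsPn Hn]; exfalso.
  have Hsub : [set u | o u a] \subset [set b].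
    apply/subsetP => u; rewrite !inE; move: (Hn u); rewrite negb_and negbK.
    by case: (o u a).
  have := subset_leq_card Hsub; by rewrite cards1 -[#|_|]/(indeg o a) Ha.
have Hs0 : indeg o s = 0.
  have Hadj := (Ho s a).1 Hsa.
  case: (cls s) => // Hs.
    case: (memA2 _ Hs) => E; last by rewrite E eqxx in Hsb.
    by move: Hadj; rewrite E (negbTE (adj_irr a)).
  by case: (Xor s a Hadj Hsa); apply: P2 => //; apply: adj_sym.
have [t /andP [/andP [Hta Hnta] Htb]] : exists t, (cube_adj t a && ~~ o t a) && (t != b).
  case: (boolP [exists t, (cube_adj t a && ~~ o t a) && (t != b)]) => [/existsP //|/existsPn Hn]; exfalso.
  have Hsub : [set u : cube_vertex 4 | cube_adj u a] \subset [set u | o u a] :|: [set b].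
    apply/subsetP => u; rewrite !inE; move: (Hn u); rewrite !negb_and !negbK.
    by case: (cube_adj u a); case: (o u a).
  have := subset_leq_card Hsub; rewrite card_nbrs cardsU cards1 -[#|[set u | o u a]|]/(indeg o a) Ha.
  by move=> H; have := leq_trans H (leq_subr _ _).
have Ht4 : indeg o t = 4.
  have Hat : o a t by move: ((Ho t a).2 Hta); rewrite (negbTE Hnta).
  case: (cls t) => // Ht.
    by move: Hnta; rewrite (P1 t a Ht Hta).
  case: (memA2 _ Ht) => E; last by rewrite E eqxx in Htb.
  by move: Hta; rewrite E (negbTE (adj_irr a)).
have [i Ei] : exists i, s = flip a i by apply/adjP; apply: (Ho s a).1.
have [j Ej] : exists j, t = flip a j by apply/adjP.
have Hij : i != j.
  by apply/eqP => E; move: Hs0; rewrite Ei E -Ej Ht4.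
rewrite Ei in Hs0; rewrite Ej in Ht4.
have Eb := G i j Hij Hs0 Ht4.
have [m /andP [Hmi Hmj]] := third i j.
have bm : b m = a m by rewrite -Eb flip2_other.
have Hna : cube_adj (flip a m) a by apply/adjP; exists m.
case: (cls (flip a m)) => Hn.
- have := congr1 (fun f : cube_vertex 4 => f m) (G m j Hmj Hn Ht4) => /=.
  by rewrite flip2_l // bm => /esym /nb_neq.
- case: (memA2 _ Hn) => E.
    by move: Hna; rewrite E (negbTE (adj_irr a)).
  have := congr1 (fun f : cube_vertex 4 => f m) E => /=.
  by rewrite flipE eqxx bm => /esym /nb_neq.
- have Him : i != m by rewrite eq_sym.
  have := congr1 (fun f : cube_vertex 4 => f m) (G i m Him Hs0 Hn) => /=.
  by rewrite flip2_r // bm => /esym /nb_neq.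
Qed.
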